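(* Let $t\in\mathbb{R}$ and $u\in\mathbb{R}\setminus\{0,1\}$. Then $\mathfrak{g}_{t,u}\in\mathcal{P}^s_{4,4}$ if and only if $V_F(t,\omega(u))\ge0$. Moreover $-\mathfrak{g}_{t,u}\notin\mathcal{P}^s_{4,4}$.
   Context: Variables $a,b,c,d$. Put $s_0=a^4+b^4+c^4+d^4-4abcd$; $s_1=T_{3,1}-12abcd$ with $T_{3,1}=\sum_{i\ne j}x_i^3x_j$; $s_2=\sum_{i<j}x_i^2x_j^2-6abcd$; $s_3=T_{2,1,1}-12abcd$ with $T_{2,1,1}=\sum_i x_i^2\sum_{j<k,\ j,k\ne i}x_jx_k$; $s_4=abcd$ (here $(x_1,x_2,x_3,x_4)=(a,b,c,d)$). Let $\omega(u)=u+\frac1u-2$ and $p^G_0(t,w)=(4t+2)w^2-3(t-1)^2w$, $p^G_1(t,w)=-2(t+1)^2w^2+2(t+1)(t-1)^2w$, $p^G_2(t,w)=4t^2w^2-2(t-1)^2(2t-1)w+2(t-1)^4$, $p^G_3(t,w)=2(t+1)^2w^2-(t-1)^2(t^2+3)w-2(t-1)^4$, $p^G_4(t,w)=2(t-1)^4w^2$, and for $u\ne0$, $\mathfrak{g}_{t,u}=u^2\sum_{i=0}^4p^G_i(t,\omega(u))s_i$. Let $V_F(t,w)=(3+6t-t^2)w^2-6(t-1)^2w$. $\mathcal{P}^s_{4,4}$ is the cone of symmetric real quartic forms in $a,b,c,d$ that are nonnegative on $\mathbb{R}^4$. *)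

(* Defs.v *)
From Stdlib Require Import Reals Lra.
Open Scope R_scope.

Definition form4 := R -> R -> R -> R -> R.

Definition s0 : form4 := fun a b c d => a^4 + b^4 + c^4 + d^4 - 4*a*b*c*d.

Definition T31 : form4 := fun a b c d =>
  a^3*(b+c+d) + b^3*(a+c+d) + c^3*(a+b+d) + d^3*(a+b+c).
Definition s1 : form4 := fun a b c d => T31 a b c d - 12*a*b*c*d.

Definition s2 : form4 := fun a b c d =>
  a^2*b^2 + a^2*c^2 + a^2*d^2 + b^2*c^2 + b^2*d^2 + c^2*d^2 - 6*a*b*c*d.

Definition T211 : form4 := fun a b c d =>
  a^2*(b*c + b*d + c*d) + b^2*(a*c + a*d + c*d)
  + c^2*(a*b + a*d + b*d) + d^2*(a*b + a*c + b*c).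
Definition s3 : form4 := fun a b c d => T211 a b c d - 12*a*b*c*d.

Definition s4 : form4 := fun a b c d => a*b*c*d.

Definition omega (u : R) : R := u + / u - 2.

Definition pG0 (t w : R) : R := (4*t+2)*w^2 - 3*(t-1)^2*w.
Definition pG1 (t w : R) : R := -2*(t+1)^2*w^2 + 2*(t+1)*(t-1)^2*w.
Definition pG2 (t w : R) : R := 4*t^2*w^2 - 2*(t-1)^2*(2*t-1)*w + 2*(t-1)^4.
Definition pG3 (t w : R) : R := 2*(t+1)^2*w^2 - (t-1)^2*(t^2+3)*w - 2*(t-1)^4.
Definition pG4 (t w : R) : R := 2*(t-1)^4*w^2.

Definition gform (t u : R) : form4 := fun a b c d =>
  let w := omega u in
  u^2 * (pG0 t w * s0 a b c d + pG1 t w * s1 a b c d + pG2 t w * s2 a b c d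
         + pG3 t w * s3 a b c d + pG4 t w * s4 a b c d).

Definition VF (t w : R) : R := (3 + 6*t - t^2)*w^2 - 6*(t-1)^2*w.

Definition is_quartic_form (f : form4) : Prop :=
  exists (coef : nat -> nat -> nat -> nat -> R),
    forall a b c d, f a b c d =
      sum_f_R0 (fun i => sum_f_R0 (fun j => sum_f_R0 (fun k =>
        if (i + j + k <=? 4)%nat then
          coef i j k (4 - i - j - k)%nat * a^i * b^j * c^k * d^(4 - i - j - k)
        else 0) 4) 4) 4.

(* Symmetric under all permutations of the variables (generated by
   the transposition (a b) and the 4-cycle (a b c d)). *)
Definition is_symmetric4 (f : form4) : Prop :=
  forall a b c d, f a b c d = f b a c d /\ f a b c d = f b c d a.

Definition in_Ps44 (f : form4) : Prop :=
  is_quartic_form f /\ is_symmetric4 f /\ forall a b c d, 0 <= f a b c d.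

Definition opp_form (f : form4) : form4 := fun a b c d => - f a b c d.

(* Main.v *)
Require Import Defs.
From Stdlib Require Import Reals Lra Psatz.
Open Scope R_scope.

Definition G (t w a b c d : R) : R :=
  pG0 t w * s0 a b c d + pG1 t w * s1 a b c d + pG2 t w * s2 a b c d
         + pG3 t w * s3 a b c d + pG4 t w * s4 a b c d.

Lemma gform_G t u a b c d : gform t u a b c d = u^2 * G t (omega u) a b c d.
Proof. reflexivity. Qed.
Definition c0 (t w : R) : R := (2)*t^4*w^2 + (-8)*t^3*w^2 + (12)*t^2*w^2 + (-8)*t^1*w^2 + (2)*w^2.
Definition c1 (t w : R) : R := (-1)*t^4*w^2 + (-4)*t^4*w^1 + (4)*t^3*w^2 + (16)*t^3*w^1 + (-6)*t^2*w^2 + (-24)*t^2*w^1 + (4)*t^1*w^2 + (16)*t^1*w^1 + (-1)*w^2 + (-4)*w^1.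
Definition c2 (t w : R) : R := (2/3)*t^4*w^2 + (4)*t^4*w^1 + (-8/3)*t^3*w^2 + (-12)*t^2*w^2 + (-24)*t^2*w^1 + (8)*t^1*w^2 + (32)*t^1*w^1 + (6)*w^2 + (-12)*w^1.
Definition c3 (t w : R) : R := (1/4)*t^4*w^2 + (2)*t^4*w^1 + (7/2)*t^4 + (-1)*t^3*w^2 + (-6)*t^3*w^1 + (-14)*t^3 + (-1/2)*t^2*w^2 + (10)*t^2*w^1 + (21)*t^2 + (-5)*t^1*w^2 + (-10)*t^1*w^1 + (-14)*t^1 + (-7/4)*w^2 + (4)*w^1 + (7/2).
Definition c4 (t w : R) : R := (-1/2)*t^4*w^2 + (-4)*t^4*w^1 + (-6)*t^4 + (2)*t^3*w^2 + (8)*t^3*w^1 + (24)*t^3 + (5)*t^2*w^2 + (-16)*t^2*w^1 + (-36)*t^2 + (18)*t^1*w^2 + (24)*t^1*w^1 + (24)*t^1 + (15/2)*w^2 + (-12)*w^1 + (-6).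

Definition H (t w m Q2 Q3 Q4 : R) : R :=
  c0 t w * m^4 + c1 t w * m^2*Q2 + c2 t w * m*Q3 + c3 t w * Q2^2 + c4 t w * Q4.

Definition Qh (t w p q : R) : R :=
  pG0 t w * p^2 + (2*t^2*w^2 + 6*t^2*w - 8*t*w^2 - 12*t*w - 6*w^2 + 6*w) * p * q
  + (6*w^2 - 3*(t-1)^2*w) * q^2.

Ltac U := unfold G, H, Qh, c0, c1, c2, c3, c4, pG0, pG1, pG2, pG3, pG4, s0, s1, s2, s3, s4, T31, T211.

Lemma G_pair t w m x y z :
  G t w (m+x+y) (m+x-y) (m-x+z) (m-x-z) =
  H t w m (4*x^2+2*y^2+2*z^2) (6*x*(y^2-z^2)) (4*x^4+12*x^2*(y^2+z^2)+2*y^4+2*z^4).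
Proof. U. field. Qed.

Lemma H13 t w m r : H t w m (12*r^2) (24*r^3) (84*r^4) = G t w (m+3*r) (m-r) (m-r) (m-r).
Proof. U. field. Qed.

Lemma H0 t w m r : H t w m (12*r^2) 0 (36*r^4) = 2*(t-1)^4*(-w*m^2+(w+4)*3*r^2)^2.
Proof. U. field. Qed.

Lemma G13 t w p q : G t w p q q q = (p-t*q)^2 * Qh t w p q.
Proof. U. ring. Qed.

Lemma Hdec t w m r Q3 Q4 :
  96*r^4 * H t w m (12*r^2) Q3 Q4 =
  2*(84*r^4-Q4) * H t w m (12*r^2) 0 (36*r^4)
  + (Q4-36*r^4+2*r*Q3) * H t w m (12*r^2) (24*r^3) (84*r^4)
  + (Q4-36*r^4-2*r*Q3) * H t w m (12*r^2) (-(24*r^3)) (84*r^4).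
Proof. unfold H. ring. Qed.

Lemma Qh_id t w p q :
  4 * pG0 t w * Qh t w p q = (2*pG0 t w*p + (2*t^2*w^2 + 6*t^2*w - 8*t*w^2 - 12*t*w - 6*w^2 + 6*w)*q)^2
     + 4*(t-1)^2*w^2*VF t w * q^2.
Proof. unfold Qh, VF, pG0. ring. Qed.

Lemma Qh11 t w : Qh t w 1 1 = 2*w^2*(t-1)^2.
Proof. unfold Qh, pG0. ring. Qed.

Lemma sq_pos w : w <> 0 -> 0 < w^2.
Proof. intro h. destruct (Rtotal_order w 0) as [h1|[h1|h1]]; [nra|contradiction|nra]. Qed.

Lemma Qh_nonneg t w p q : w <> 0 -> 0 <= VF t w -> 0 <= Qh t w p q.
Proof.
  intros hw hv.
  pose proof (Qh_id t w p q) as E. pose proof (Qh_id t w 1 1) as E1.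
  rewrite Qh11 in E1.
  set (al := pG0 t w) in *.
  set (be := (2*t^2*w^2 + 6*t^2*w - 8*t*w^2 - 12*t*w - 6*w^2 + 6*w)) in *.
  assert (hw2 : 0 < w^2) by (apply sq_pos; auto).
  assert (hs : 0 <= (t-1)^2) by (apply pow2_ge_0).
  assert (hK : 0 <= 4*(t-1)^2*w^2*VF t w * q^2).
  { apply Rmult_le_pos; [|apply pow2_ge_0]. apply Rmult_le_pos; [|auto]. nra. }
  destruct (Rtotal_order al 0) as [hl|[hl|hl]].
  -
    exfalso.
    assert (h1 : 0 <= 4*(t-1)^2*w^2*VF t w * 1^2).
    { apply Rmult_le_pos; [|apply pow2_ge_0]. apply Rmult_le_pos; [|auto]. nra. }
    assert (h2 : 0 <= (2 * al * 1 + be * 1) ^ 2) by apply pow2_ge_0.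
    assert (hp : 0 <= w^2*(t-1)^2) by (apply Rmult_le_pos; lra).
    assert (hq : al*(w^2*(t-1)^2) >= 0) by nra.
    assert (hq2 : al*(w^2*(t-1)^2) <= 0) by nra.
    assert (hq3 : w^2*(t-1)^2 = 0).
    { assert (hh : al*(w^2*(t-1)^2) = 0) by lra.
      destruct (Rmult_integral _ _ hh) as [h|h]; lra. }
    assert (hz : (t-1)^2 = 0).
    { destruct (Rmult_integral _ _ hq3) as [h|h]; lra. }
    assert (t = 1) by nra. subst t.
    unfold al, pG0 in hl. nra.
  -
    assert (hb : be = 0).
    { assert (0 <= 4*(t-1)^2*w^2*VF t w * 1^2).
      { apply Rmult_le_pos; [|apply pow2_ge_0]. apply Rmult_le_pos; [|auto]. nra. }
      rewrite hl in E1. nra. }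
    pose proof (Qh11 t w) as Q. unfold Qh in Q |- *. fold al be in Q |- *.
    rewrite hl, hb in Q |- *.
    assert (hg : 6*w^2 - 3*(t-1)^2*w = 2*w^2*(t-1)^2) by lra.
    rewrite hg. pose proof (pow2_ge_0 q). assert (0 <= 2*w^2*(t-1)^2*q^2) by (apply Rmult_le_pos; [apply Rmult_le_pos; [apply Rmult_le_pos|]|]; lra). lra.
  - assert (0 <= 4 * al * Qh t w p q) by (rewrite E; pose proof (pow2_ge_0 (2*al*p+be*q)); lra).
    destruct (Rle_or_lt 0 (Qh t w p q)) as [h|h]; auto.
    assert (4*al*Qh t w p q < 0).
    { assert (n1 : 0 < 4*al) by lra. pose proof (Rmult_lt_compat_l _ _ _ n1 h). lra. }
    lra.
Qed.

Lemma G13_nonneg t w p q : w <> 0 -> 0 <= VF t w -> 0 <= G t w p q q q.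
Proof.
  intros hw hv. rewrite G13. apply Rmult_le_pos; [apply pow2_ge_0|]. now apply Qh_nonneg.
Qed.

Lemma uv_nonneg a b : 0 <= a + b -> 0 <= a * b -> 0 <= a /\ 0 <= b.
Proof. intros h1 h2. split; destruct (Rle_or_lt 0 a); destruct (Rle_or_lt 0 b); nra. Qed.

Lemma H_nonneg t w m x y z : w <> 0 -> 0 <= VF t w ->
  0 <= H t w m (4*x^2+2*y^2+2*z^2) (6*x*(y^2-z^2)) (4*x^4+12*x^2*(y^2+z^2)+2*y^4+2*z^4).
Proof.
  intros hw hv.
  set (Q2 := 4*x^2+2*y^2+2*z^2).
  set (Q3 := 6*x*(y^2-z^2)).
  set (Q4 := 4*x^4+12*x^2*(y^2+z^2)+2*y^4+2*z^4).
  assert (hx := pow2_ge_0 x). assert (hy := pow2_ge_0 y). assert (hz := pow2_ge_0 z).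
  destruct (Req_dec Q2 0) as [h0|h0].
  - assert (x^2 = 0 /\ y^2 = 0 /\ z^2 = 0) as [e1 [e2 e3]] by (unfold Q2 in h0; lra).
    assert (H t w m Q2 Q3 Q4 = H t w m (12*0^2) 0 (36*0^4)) as ->.
    { unfold Q2, Q3, Q4. unfold H. rewrite e1, e2, e3.
      replace (x^4) with ((x^2)^2) by ring. replace (y^4) with ((y^2)^2) by ring.
      replace (z^4) with ((z^2)^2) by ring. rewrite e1, e2, e3. ring. }
    rewrite H0. apply Rmult_le_pos; [|apply pow2_ge_0].
    apply Rmult_le_pos; [lra|]. replace ((t-1)^4) with (((t-1)^2)^2) by ring. apply pow2_ge_0.
  - assert (hQ2 : 0 < Q2) by (unfold Q2 in *; lra).
    set (r := sqrt (Q2/12)).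
    assert (hr : 0 < r) by (apply sqrt_lt_R0; lra).
    assert (hr2 : r^2 = Q2/12).
    { unfold r. simpl. rewrite Rmult_1_r. apply sqrt_sqrt. lra. }
    assert (eQ2 : Q2 = 12*r^2) by lra.
    rewrite eQ2.
    assert (hr4 : 0 < r^4) by (apply pow_lt; lra).
    pose proof (Hdec t w m r Q3 Q4) as E.
    assert (f0 : 0 <= H t w m (12*r^2) 0 (36*r^4)).
    { rewrite H0. apply Rmult_le_pos; [|apply pow2_ge_0].
      apply Rmult_le_pos; [lra|]. replace ((t-1)^4) with (((t-1)^2)^2) by ring. apply pow2_ge_0. }
    assert (fp : 0 <= H t w m (12*r^2) (24*r^3) (84*r^4)).
    { rewrite H13. now apply G13_nonneg. }
    assert (fm : 0 <= H t w m (12*r^2) (-(24*r^3)) (84*r^4)).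
    { replace (H t w m (12*r^2) (-(24*r^3)) (84*r^4)) with
        (H t w m (12*(-r)^2) (24*(-r)^3) (84*(-r)^4)) by (unfold H; ring).
      rewrite H13. now apply G13_nonneg. }
    set (A := x^2). set (X := y^2). set (Y := z^2).
    assert (eQ4 : Q4 = 4*A^2 + 12*A*(X+Y) + 2*X^2 + 2*Y^2) by (unfold Q4, A, X, Y; ring).
    assert (eQ2' : Q2 = 4*A+2*X+2*Y) by (unfold Q2, A, X, Y; ring).
    assert (eQ3 : Q3^2 = 36*A*(X-Y)^2) by (unfold Q3, A, X, Y; ring).
    assert (r4 : r^4 = Q2^2/144) by (replace (r^4) with ((r^2)^2) by ring; rewrite hr2; field).
    assert (m0 : 0 <= 84*r^4 - Q4).
    { rewrite r4, eQ2', eQ4.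
      assert (0 <= X*Y) by (apply Rmult_le_pos; unfold X, Y; lra).
      assert (0 <= (4*A-(X+Y))^2) by apply pow2_ge_0.
      nra. }
    set (L := Q4 - 36*r^4).
    assert (hL : L = 8*A*(X+Y) + (X-Y)^2).
    { unfold L. rewrite r4, eQ2', eQ4. field. }
    assert (hL0 : 0 <= L).
    { rewrite hL. assert (0 <= A*(X+Y)) by (apply Rmult_le_pos; unfold A, X, Y in *; lra).
      pose proof (pow2_ge_0 (X-Y)). lra. }
    assert (hprod : 0 <= (L + 2*r*Q3) * (L - 2*r*Q3)).
    { replace ((L + 2*r*Q3) * (L - 2*r*Q3)) with (L^2 - 4*r^2*Q3^2) by ring.
      rewrite hL, eQ3, hr2, eQ2'.
      replace ((8 * A * (X + Y) + (X - Y) ^ 2) ^ 2 - 4 * ((4 * A + 2 * X + 2 * Y) / 12) * (36 * A * (X - Y) ^ 2))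
        with (((X-Y)^2 - 4*A*(X+Y))^2 + 192*A^2*(X*Y)) by field.
      assert (0 <= X*Y) by (apply Rmult_le_pos; unfold X, Y; lra).
      pose proof (pow2_ge_0 ((X-Y)^2 - 4*A*(X+Y))). pose proof (pow2_ge_0 A). nra. }
    destruct (uv_nonneg (L + 2*r*Q3) (L - 2*r*Q3)) as [hp hm]; [lra|exact hprod|].
    assert (k0 : 0 <= 96*r^4*H t w m (12*r^2) Q3 Q4).
    { rewrite E. fold L.
      replace (Q4 - 36*r^4 + 2*r*Q3) with (L + 2*r*Q3) by (unfold L; ring).
      replace (Q4 - 36*r^4 - 2*r*Q3) with (L - 2*r*Q3) by (unfold L; ring).
      assert (k1 : 0 <= 2*(84*r^4-Q4)*H t w m (12*r^2) 0 (36*r^4)) by (apply Rmult_le_pos; lra).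
      assert (k2 : 0 <= (L + 2*r*Q3)*H t w m (12*r^2) (24*r^3) (84*r^4)) by (apply Rmult_le_pos; lra).
      assert (k3 : 0 <= (L - 2*r*Q3)*H t w m (12*r^2) (-(24*r^3)) (84*r^4)) by (apply Rmult_le_pos; lra).
      lra. }
    destruct (Rle_or_lt 0 (H t w m (12*r^2) Q3 Q4)) as [h|h]; auto.
    assert (96*r^4*H t w m (12*r^2) Q3 Q4 < 0).
    { assert (k4 : 0 < 96*r^4) by lra.
      pose proof (Rmult_lt_compat_l _ _ _ k4 h) as k5. lra. }
    lra.
Qed.

Lemma G_nonneg t w a b c d : w <> 0 -> 0 <= VF t w -> 0 <= G t w a b c d.
Proof.
  intros hw hv.
  set (m := (a+b+c+d)/4). set (x := (a+b-c-d)/4). set (y := (a-b)/2). set (z := (c-d)/2).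
  replace a with (m+x+y) by (unfold m, x, y; field).
  replace b with (m+x-y) by (unfold m, x, y; field).
  replace c with (m-x+z) by (unfold m, x, z; field).
  replace d with (m-x-z) by (unfold m, x, z; field).
  rewrite G_pair. now apply H_nonneg.
Qed.

Definition cf (t u : R) (i j k l : nat) : R :=
  let w := omega u in
  match Nat.max i (Nat.max j (Nat.max k l)) with
  | 4%nat => u^2 * pG0 t w
  | 3%nat => u^2 * pG1 t w
  | 2%nat => if Nat.eqb (Nat.b2n (Nat.eqb i 0) + Nat.b2n (Nat.eqb j 0) + Nat.b2n (Nat.eqb k 0) + Nat.b2n (Nat.eqb l 0)) 2
             then u^2 * pG2 t w else u^2 * pG3 t w
  | 1%nat => u^2 * (pG4 t w - 4*pG0 t w - 12*pG1 t w - 6*pG2 t w - 12*pG3 t w)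
  | _ => 0
  end.

Lemma gform_quartic t u : is_quartic_form (gform t u).
Proof.
  exists (cf t u). intros a b c d.
  unfold cf. simpl.
  unfold gform, s0, s1, s2, s3, s4, T31, T211. ring.
Qed.

Lemma gform_sym t u : is_symmetric4 (gform t u).
Proof.
  intros a b c d. unfold gform, s0, s1, s2, s3, s4, T31, T211. split; ring.
Qed.

Lemma two_points t w p1 p2 : Qh t w p1 1 < 0 -> Qh t w p2 1 < 0 -> p1 <> p2 ->
  exists p, G t w p 1 1 1 < 0.
Proof.
  intros h1 h2 hne.
  assert (K : forall p, p <> t -> Qh t w p 1 < 0 -> G t w p 1 1 1 < 0).
  { intros p hp hq. rewrite G13.
    assert (n1 : 0 < (p - t*1)^2) by (apply sq_pos; intro; apply hp; lra).
    pose proof (Rmult_lt_compat_l _ _ _ n1 hq). lra. }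
  destruct (Req_dec p1 t) as [e|e].
  - exists p2. apply K; auto. intro; subst; auto.
  - exists p1. apply K; auto.
Qed.

Lemma only_if t w : w <> 0 -> (forall a b c d, 0 <= G t w a b c d) -> 0 <= VF t w.
Proof.
  intros hw hG. destruct (Rle_or_lt 0 (VF t w)) as [h|hv]; auto. exfalso.
  assert (hw2 := sq_pos w hw).
  assert (ht : t <> 1).
  { intro e; subst t. unfold VF in hv. nra. }
  assert (hs : 0 < (t-1)^2) by (apply sq_pos; lra).
  set (al := pG0 t w).
  set (be := 2*t^2*w^2 + 6*t^2*w - 8*t*w^2 - 12*t*w - 6*w^2 + 6*w).
  set (ga := 6*w^2 - 3*(t-1)^2*w).
  assert (eQ : forall p, Qh t w p 1 = al*p^2 + be*p + ga) by (intro; unfold Qh; fold al; unfold be, ga; ring).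
  assert (hneg : 4*(t-1)^2*w^2*VF t w < 0).
  { assert (n1 : 0 < 4*(t-1)^2*w^2) by (apply Rmult_lt_0_compat; lra).
    pose proof (Rmult_lt_compat_l _ _ _ n1 hv). lra. }
  assert (Eid : forall p, 4*al*(al*p^2+be*p+ga) = (2*al*p+be)^2 + 4*(t-1)^2*w^2*VF t w).
  { intro p. unfold al, be, ga, VF, pG0. ring. }
  destruct (Rtotal_order al 0) as [hl|[hl|hl]].
  - specialize (hG 1 0 0 0). rewrite G13 in hG.
    assert (n1 : Qh t w 1 0 = al) by (unfold Qh; fold al; ring). rewrite n1 in hG. lra.
  - specialize (Eid 0). rewrite hl in Eid.
    assert (hb : be <> 0) by (intro e; rewrite e in Eid; lra).
    destruct (two_points t w ((-ga-1)/be) ((-ga-2)/be)) as [p hp].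
    + rewrite eQ, hl. replace (0*((-ga-1)/be)^2 + be*((-ga-1)/be) + ga) with (-1) by (field; auto). lra.
    + rewrite eQ, hl. replace (0*((-ga-2)/be)^2 + be*((-ga-2)/be) + ga) with (-2) by (field; auto). lra.
    + intro e. assert (e1 : ((-ga-1)/be)*be = ((-ga-2)/be)*be) by (rewrite e; auto).
      replace (((-ga-1)/be)*be) with (-ga-1) in e1 by (field; auto).
      replace (((-ga-2)/be)*be) with (-ga-2) in e1 by (field; auto). lra.
    + specialize (hG p 1 1 1). lra.
  - set (p1 := -be/(2*al)).
    set (V := al*p1^2+be*p1+ga).
    assert (hV : V < 0).
    { assert (4*al*V < 0).
      { unfold V. rewrite Eid. replace (2*al*p1+be) with 0 by (unfold p1; field; lra). lra. }
      destruct (Rle_or_lt 0 V) as [h|h]; auto. assert (0 <= 4*al*V) by (apply Rmult_le_pos; lra). lra. }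
    set (de := -V/(2*al - V)).
    assert (hde0 : 0 < de) by (unfold de; apply Rdiv_lt_0_compat; lra).
    assert (hde3 : de*(2*al-V) = -V) by (unfold de; field; lra).
    assert (hde1 : de < 1) by nra.
    assert (hde2 : al*de*(2*al-V) = -V*al) by (unfold de; field; lra).
    assert (hade : al*de <= -V/2) by nra.
    assert (e2 : al*(p1+de)^2+be*(p1+de)+ga = V + al*de^2).
    { unfold V. replace be with (-(2*al*p1)) by (unfold p1; field; lra). ring. }
    destruct (two_points t w p1 (p1+de)) as [p hp].
    + rewrite eQ. fold V. lra.
    + rewrite eQ, e2. assert (al*de^2 <= al*de) by nra. lra.
    + lra.
    + specialize (hG p 1 1 1). lra.
Qed.

Theorem theorem2p4 (t u : R) (hu0 : u <> 0) (hu1 : u <> 1) :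
  (in_Ps44 (gform t u) <-> 0 <= VF t (omega u))
  /\ ~ in_Ps44 (opp_form (gform t u)).
Proof.
  assert (hw : omega u <> 0).
  { intro e. assert (E : u * omega u = (u-1)^2) by (unfold omega; field; auto).
    rewrite e in E. assert (hz : (u-1)^2 = 0) by lra.
    apply hu1. assert (n2 : (u-1)*(u-1) = 0) by (rewrite <- hz; ring).
    destruct (Rmult_integral _ _ n2); lra. }
  assert (hu2 : 0 < u^2) by (apply sq_pos; auto).
  assert (Gpos : forall a b c d, 0 <= gform t u a b c d -> 0 <= G t (omega u) a b c d).
  { intros a b c d h. rewrite gform_G in h.
    destruct (Rle_or_lt 0 (G t (omega u) a b c d)) as [h'|h']; auto.
    pose proof (Rmult_lt_compat_l _ _ _ hu2 h'). lra. }
  split; [split|].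
  - intros [_ [_ hpos]]. apply only_if; auto.
  - intros hv. split; [apply gform_quartic|split; [apply gform_sym|]].
    intros a b c d. rewrite gform_G. apply Rmult_le_pos; [lra|]. apply G_nonneg; auto.
  - intros [_ [_ hpos]]. unfold opp_form in hpos.
    set (w := omega u) in *.
    assert (hw2 := sq_pos w hw).
    destruct (Req_dec t 1) as [e|e].
    + specialize (hpos 0 1 1 1). rewrite gform_G in hpos. fold w in hpos.
      rewrite G13 in hpos.
      assert (n1 : Qh t w 0 1 = 6*w^2) by (unfold Qh; rewrite e; ring).
      rewrite n1 in hpos.
      assert (0 < u^2 * ((0 - t*1)^2 * (6*w^2))).
      { apply Rmult_lt_0_compat; auto. rewrite e. nra. }
      lra.
    + specialize (hpos 1 1 1 1). rewrite gform_G in hpos. fold w in hpos.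
      rewrite G13, Qh11 in hpos.
      assert (hs : 0 < (t-1)^2) by (apply sq_pos; lra).
      assert (hs' : 0 < (1 - t*1)^2) by (apply sq_pos; lra).
      assert (0 < u^2 * ((1 - t*1)^2 * (2*w^2*(t-1)^2))).
      { apply Rmult_lt_0_compat; auto. apply Rmult_lt_0_compat; auto.
        apply Rmult_lt_0_compat; auto. lra. }
      lra.
Qed.
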